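(* Let $U\subset(0,1)^m$ be open and let $b:U\to\mathbb{R}$ be given by $b(x)=ax^\mu=a\prod_{i=1}^m x_i^{\mu_i}$ for some $a\in\mathbb{R}$ and $\mu\in\mathbb{R}^m$. If $b$ is bounded, then $b$ is weakly $(M,B,0)$-mild, where $M=\max(1,|\mu_1|,\ldots,|\mu_m|)$ and $B=\sup_{x\in U}|b(x)|$.
   Context: For $W\subset(0,1)^d$ open, $A,B>0$, $C\ge0$: $g:W\to\mathbb{R}$ is weakly $(A,B,C)$-mild if it is $C^\infty$ and $|g^{(\nu)}(x)|\le B^{C+1}A^{|\nu|}|\nu|!^{C+1}/x^\nu$ for all $x\in W$ and $\nu\in\mathbb{N}^d$, where $x^\nu=\prod x_i^{\nu_i}$, $|\nu|=\sum\nu_i$, and $g^{(\nu)}=\partial^{|\nu|}g/\partial x_1^{\nu_1}\cdots\partial x_d^{\nu_d}$. *)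

(* Defs.v *)
From HB Require Import structures.
From mathcomp Require Import all_boot all_order all_algebra.
From mathcomp Require Import all_classical all_reals all_analysis.
Set Implicit Arguments. Unset Strict Implicit. Unset Printing Implicit Defensive.
Import Order.TTheory GRing.Theory Num.Theory.
Import numFieldNormedType.Exports.
Local Open Scope classical_set_scope.
Local Open Scope ring_scope.

Section Defs.
Variable R : realType.

Definition ecoord (d : nat) (i : 'I_d) : 'rV[R]_d := delta_mx 0 i.

(* partial derivative d/dx_i (as a total function; meaningful where it exists) *)
Definition dpartial (d : nat) (i : 'I_d) (f : 'rV[R]_d -> R) : 'rV[R]_d -> R :=
  fun x => 'D_(ecoord i) f x.

Definition dpartials (d : nat) (s : seq 'I_d) (f : 'rV[R]_d -> R) : 'rV[R]_d -> R :=
  foldr (@dpartial d) f s.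

Definition smooth_on (d : nat) (W : set 'rV[R]_d) (f : 'rV[R]_d -> R) : Prop :=
  forall (s : seq 'I_d) (x : 'rV[R]_d), W x ->
    {for x, continuous (dpartials s f)} /\
    forall i : 'I_d, derivable (dpartials s f) x (ecoord i).

Definition mabs (d : nat) (nu : 'I_d -> nat) : nat := (\sum_(i < d) nu i)%N.

(* g^(nu) = d^|nu| g / dx_1^nu_1 ... dx_d^nu_d *)
Definition mderiv (d : nat) (nu : 'I_d -> nat) (f : 'rV[R]_d -> R) : 'rV[R]_d -> R :=
  dpartials (flatten [seq nseq (nu i) i | i <- enum 'I_d]) f.

Definition mpow (d : nat) (x : 'rV[R]_d) (nu : 'I_d -> nat) : R :=
  \prod_(i < d) (x 0 i) ^+ nu i.

(* weakly (A,B,C)-mild on W (the parameter constraints A,B>0, C>=0 are not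
   built in) *)
Definition weakly_mild (d : nat) (W : set 'rV[R]_d) (A B C : R)
    (g : 'rV[R]_d -> R) : Prop :=
  smooth_on W g /\
  forall (nu : 'I_d -> nat) (x : 'rV[R]_d), W x ->
    `| mderiv nu g x | <=
      B `^ (C + 1) * A ^+ mabs nu * ((mabs nu)`!)%:R `^ (C + 1) / mpow x nu.

Definition unit_cube (d : nat) : set 'rV[R]_d :=
  [set x | forall i : 'I_d, 0 < x 0 i < 1].

End Defs.

(* Main.v *)
Require Import Defs.
From HB Require Import structures.
From mathcomp Require Import all_boot all_order all_algebra.
From mathcomp Require Import all_classical all_reals all_analysis.
From mathcomp Require Import ring lra.
Import Order.TTheory GRing.Theory Num.Theory.
Import numFieldNormedType.Exports.
Local Open Scope classical_set_scope.
Local Open Scope ring_scope.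

Section Aux.
Variables (R : realType) (m : nat).

Definition Gf (c : R) (e : 'I_m -> R) (x : 'rV[R]_m) : R :=
  c * \prod_(j < m) (x 0 j) `^ (e j).

Lemma ecoordE (i : 'I_m) (h : R) (x : 'rV[R]_m) j :
  (h *: ecoord R i + x) 0 j = (if j == i then h + x 0 j else x 0 j).
Proof.
rewrite /ecoord !mxE eqxx /=; case: eqP => [->|_]; first by rewrite mulr1.
by rewrite mulr0 add0r.
Qed.

Lemma Gf_line (i : 'I_m) c e (x : 'rV[R]_m) (h : R) :
  Gf c e (h *: ecoord R i + x) =
  (c * \prod_(j < m | j != i) (x 0 j) `^ (e j)) * (h + x 0 i) `^ (e i).
Proof.
rewrite /Gf (bigD1 i) //= ecoordE eqxx -mulrA; congr (_ * _); rewrite mulrC; congr (_ * _).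
by apply: eq_bigr => j /negPf ji; rewrite ecoordE ji.
Qed.

Lemma line_derive (f : 'rV[R]_m -> R) (P : R -> R) a v t0 :
  (forall h, f (h *: v + a) = P (h + t0)) ->
  (derivable f a v <-> derivable P t0 1) /\ 'D_v f a = 'D_1 P t0.
Proof.
move=> fP.
have E : (fun h : R => h^-1 *: ((f \o shift a) (h *: v) - f a)) =
         (fun h : R => h^-1 *: ((P \o shift t0) (h *: 1) - P t0)).
  have f0 := fP 0; rewrite scale0r !add0r in f0.
  by apply/funext => h /=; rewrite fP f0 [h *: 1]mulr1.
by rewrite /derivable /derive E.
Qed.

Lemma Gf_derive (i : 'I_m) c e (x : 'rV[R]_m) :
  (forall j, 0 < x 0 j) ->
  derivable (Gf c e) x (ecoord R i) /\
  'D_(ecoord R i) (Gf c e) x = Gf (c * e i) (fun j => e j - (j == i)%:R) x.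
Proof.
move=> xpos.
set K := c * \prod_(j < m | j != i) (x 0 j) `^ (e j).
have [H1 H2] := @line_derive (Gf c e) (fun t => K * t `^ (e i)) x (ecoord R i) (x 0 i)
   (Gf_line i c e x).
have D : is_derive (x 0 i) 1 (fun t => K * t `^ (e i)) (K * (e i * (x 0 i) `^ (e i - 1))).
  have P := is_derive1_powR (e i) (xpos i).
  have Z := @is_deriveZ _ _ _ _ K _ _ _ P.
  exact: Z.
split; first by apply/H1; case: D.
rewrite H2 derive_val /Gf (bigD1 i) //= eqxx /K.
rewrite [in RHS](eq_bigr (fun j => (x 0 j) `^ (e j))); last first.
  by move=> j /negPf ->; rewrite subr0.
have -> : (true%:R : R) = 1 by [].
by ring.
Qed.


Lemma powR_cont (e : R) (t : R) : 0 < t -> {for t, continuous (fun s : R => s `^ e)}.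
Proof.
move=> t0; apply: differentiable_continuous; apply/derivable1_diffP.
by have [D _] := is_derive1_powR e t0.
Qed.

Lemma Gf_cont c e (x : 'rV[R]_m) : (forall j, 0 < x 0 j) ->
  {for x, continuous (Gf c e)}.
Proof.
move=> xpos.
have H : forall r : seq 'I_m,
    {for x, continuous (fun y : 'rV[R]_m => \prod_(j <- r) (y 0 j) `^ (e j))}.
  elim=> [|j r IH].
    have -> : (fun y : 'rV[R]_m => \prod_(j <- [::]) (y 0 j) `^ (e j)) = cst 1.
      by apply/funext => y; rewrite big_nil.
    exact: cst_continuous.
  have -> : (fun y : 'rV[R]_m => \prod_(k <- j :: r) (y 0 k) `^ (e k)) =
      (fun y => (y 0 j) `^ (e j) * \prod_(k <- r) (y 0 k) `^ (e k)).
    by apply/funext => y; rewrite big_cons.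
  have HH := (@continuous_comp _ _ _ (fun y : 'rV[R]_m => y 0 j) (fun s : R => s `^ (e j)) x
     (@coord_continuous R 1 m 0 j x) (@powR_cont (e j) _ (xpos j))).
  exact: (cvgM HH IH).
have Hc : {for x, continuous (fun _ : 'rV[R]_m => c)} by exact: cst_continuous.
exact: (cvgM Hc (H (index_enum 'I_m))).
Qed.


Variables (U : set 'rV[R]_m) (a : R) (mu : 'I_m -> R).
Hypothesis openU : open U.
Hypothesis subU : U `<=` @unit_cube R m.

Let M := Num.max 1 (\big[Num.max/0]_(i < m) `|mu i|).

Let Upos x : U x -> forall j, 0 < x 0 j.
Proof. by move=> /subU Ux j; have /andP[] := Ux j. Qed.

Let nearU x : U x -> \forall y \near x, U y.
Proof. by move=> Ux; apply: open_nbhs_nbhs; split. Qed.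

Let M1 : 1 <= M. Proof. by rewrite le_max lexx. Qed.

Let muM i : `|mu i| <= M.
Proof. by rewrite le_max; apply/orP; right; exact: (le_bigmax _ (fun i => `|mu i|) i). Qed.

Definition expo (s : seq 'I_m) (j : 'I_m) : R := mu j - (count_mem j s)%:R.

Lemma claim (s : seq 'I_m) : exists c : R,
  `|c| <= `|a| * M ^+ size s * ((size s)`!)%:R /\
  forall x, U x -> dpartials s (Gf a mu) x = Gf c (expo s) x.
Proof.
elim: s => [|i s [c [Hc Hs]]].
  exists a; split; first by rewrite /= expr0 !mulr1.
  move=> x Ux /=; rewrite /Gf /expo; congr (_ * _); apply: eq_bigr => j _.
  by rewrite subr0.
exists (c * expo s i); split.
  rewrite normrM /=.
  have Hb : `|expo s i| <= M * (size s).+1%:R.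
    rewrite /expo; apply: le_trans (ler_normB _ _) _.
    rewrite normr_nat.
    have H1 : ((count_mem i s)%:R : R) <= (size s)%:R by rewrite ler_nat count_size.
    have H2 := muM i.
    have H3 : (0 : R) <= (size s)%:R by [].
    rewrite -addn1 natrD.
    have H4 : 0 <= (size s)%:R * (M - 1) by apply: mulr_ge0 => //; rewrite subr_ge0.
    lra.
  apply: le_trans (ler_pM (normr_ge0 _) (normr_ge0 _) Hc Hb) _.
  rewrite factS natrM exprS.
  rewrite le_eqVlt; apply/orP; left; apply/eqP; ring.
move=> x Ux /=; rewrite /dpartial.
rewrite (@near_eq_derive _ _ _ _ (Gf c (expo s))); last first.
  near=> y; apply: Hs; near: y; exact: nearU x Ux.
have [_ ->] := Gf_derive i c (expo s) x (Upos x Ux).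
congr (Gf _ _ _); apply/funext => j; rewrite /expo /= natrD opprD addrA eq_sym.
by rewrite addrAC.
Unshelve. all: by end_near.
Qed.


Lemma size_s (nu : 'I_m -> nat) :
  size (flatten [seq nseq (nu i) i | i <- enum 'I_m]) = mabs nu.
Proof.
rewrite size_flatten /shape -map_comp sumnE big_map big_enum /mabs /=.
by apply: eq_big => // i; rewrite size_nseq.
Qed.

Lemma count_s (nu : 'I_m -> nat) j :
  count_mem j (flatten [seq nseq (nu i) i | i <- enum 'I_m]) = nu j.
Proof.
rewrite count_flatten -map_comp sumnE big_map big_enum /=.
rewrite (bigD1 j) //= count_nseq /= eqxx mul1n big1 ?addn0 //.
move=> i; rewrite count_nseq /=; case: eqP => //= ->; rewrite eqxx.
Qed.

Lemma smooth : smooth_on U (Gf a mu).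
Proof.
move=> s x Ux; have [c [_ Hs]] := claim s.
have N : {near x, Gf c (expo s) =1 dpartials s (Gf a mu)}.
  near=> y; apply/esym; apply: Hs; near: y; exact: nearU x Ux.
split.
  have HG := Gf_cont c (expo s) x (Upos x Ux).
  apply: cvg_trans (near_eq_cvg N) _.
  rewrite /continuous_at (Hs x Ux); exact: HG.
move=> i; apply: (near_eq_derivable N).
by have [] := Gf_derive i c (expo s) x (Upos x Ux).
Unshelve. all: by end_near.
Qed.

Lemma bound (hb : exists K, forall x, U x -> `|Gf a mu x| <= K)
    (nu : 'I_m -> nat) x : U x ->
  `|mderiv nu (Gf a mu) x| <=
    (sup [set `|Gf a mu y| | y in U]) `^ (0 + 1) * M ^+ mabs nu *
    ((mabs nu)`!)%:R `^ (0 + 1) / mpow x nu.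
Proof.
move=> Ux; set B := sup _; set n := mabs nu.
have xpos := Upos x Ux.
have hbx : `|Gf a mu x| <= B.
  apply: ub_le_sup; last by exists x.
  by case: hb => K HK; exists K => y [z Uz <-]; exact: HK.
have B0 : 0 <= B := le_trans (normr_ge0 _) hbx.
rewrite add0r powRr1 // powRr1 ?ler0n //.
rewrite /mderiv; have [c [Hc Hs]] := claim (flatten [seq nseq (nu i) i | i <- enum 'I_m]).
rewrite Hs // ; rewrite size_s in Hc.
set P := \prod_(j < m) (x 0 j) `^ (mu j).
have P0 : 0 < P by apply: prodr_gt0 => j _; exact: powR_gt0.
have mp0 : 0 < mpow x nu by apply: prodr_gt0 => j _; exact: exprn_gt0.
have E : Gf c (expo (flatten [seq nseq (nu i) i | i <- enum 'I_m])) x = c * (P / mpow x nu).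
  rewrite /Gf /mpow /P -prodf_div; congr (_ * _); apply: eq_bigr => j _.
  rewrite /expo count_s powRB ?powR_mulrn //; first exact: ltW.
  by apply/implyP => _; rewrite gt_eqF.
have Q0 : 0 <= P / mpow x nu by apply: divr_ge0; apply: ltW.
rewrite E normrM (ger0_norm Q0).
apply: le_trans (ler_wpM2r Q0 Hc) _.
have haP : `|a| * P <= B by move: hbx; rewrite /Gf normrM (ger0_norm (ltW P0)).
have -> : `|a| * M ^+ n * (n`!)%:R * (P / mpow x nu) =
          (`|a| * P) * (M ^+ n * (n`!)%:R / mpow x nu) by ring.
have -> : B * M ^+ n * (n`!)%:R / mpow x nu =
          B * (M ^+ n * (n`!)%:R / mpow x nu) by ring.
apply: ler_wpM2r => //.
apply: divr_ge0; last exact: ltW.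
apply: mulr_ge0 => //; apply: exprn_ge0; exact: le_trans M1.
Qed.

End Aux.

Theorem mainTheorem6 (R : realType) (m : nat) (U : set 'rV[R]_m)
    (a : R) (mu : 'I_m -> R) :
  open U -> U `<=` @unit_cube R m ->
  let b := fun x : 'rV[R]_m => a * \prod_(i < m) (x 0 i) `^ (mu i) in
  (exists K : R, forall x, U x -> `|b x| <= K) ->
  let M := Num.max 1 (\big[Num.max/0]_(i < m) `|mu i|) in
  let B := sup [set `|b x| | x in U] in
  weakly_mild U M B 0 b.
Proof.
move=> oU sU b hb M B; split.
  exact: (@smooth R m U a mu oU sU).
move=> nu x Ux.
exact: (@bound R m U a mu oU sU hb nu x Ux).
Qed.
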